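(* Under the standing assumptions, $G$ does not contain a vertex $v$ of degree $8$ together with pairwise distinct neighbours $u,w,y,z,t$ of $v$ and a vertex $x\notin\{v,u,w,y,z,t\}$ such that $d(u)=2$, $d(w)=d(z)=3$, $x$ is adjacent to both $u$ and $w$, and $wy,zt\in E(G)$.
   Context: Standing assumptions: A total $9$-coloring of a graph is an assignment of colors from $\{1,\dots,9\}$ to the vertices and edges such that adjacent vertices, edges sharing an endpoint, and a vertex and an incident edge receive different colors. A $4$-fan is the graph on six vertices $c,u_1,\dots,u_5$ with edges $cu_j$ ($1\le j\le5$) and $u_ju_{j+1}$ ($1\le j\le4$). $G$ is a minimal counterexample: $G$ is a simple planar graph with maximum degree $8$, containing no subgraph isomorphic to a $4$-fan, that has no total $9$-coloring, and such that every simple planar graph $H$ with maximum degree at most $8$, no subgraph isomorphic to a $4$-fan, and $|V(H)|+|E(H)|<|V(G)|+|E(G)|$ has a total $9$-coloring. $d(\cdot)$ denotes degree in $G$. *)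

(* Defs.v *)
From mathcomp Require Import all_boot.
From Stdlib Require Import Reals.

Set Implicit Arguments.
Unset Strict Implicit.
Unset Printing Implicit Defensive.

Section Graphs.
Variable T : finType.
Variable e : rel T.

Definition sgraph : Prop := symmetric e /\ irreflexive e.

Definition deg (v : T) : nat := #|[set y | e v y]|.

Definition edges : {set {set T}} := [set [set x; y] | x in T, y in T & e x y].

Definition nedges : nat := #|edges|.

(* G contains a subgraph (not necessarily induced) isomorphic to the 4-fan:
   centre c, path u1 u2 u3 u4 u5, all six vertices distinct. *)
Definition has_4fan : Prop :=
  exists c u1 u2 u3 u4 u5 : T,
    [/\ uniq [:: c; u1; u2; u3; u4; u5],
        [&& e c u1, e c u2, e c u3, e c u4 & e c u5] &
        [&& e u1 u2, e u2 u3, e u3 u4 & e u4 u5]].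

(* total 9-colouring: colours of vertices cv, colours of edges ce
   (ce x y is the colour of edge xy, required symmetric on edges). *)
Definition total9_colorable : Prop :=
  exists (cv : T -> 'I_9) (ce : T -> T -> 'I_9),
    (forall x y, e x y -> ce x y = ce y x) /\
    (forall x y, e x y -> cv x != cv y) /\
    (forall x y z, e x y -> e x z -> y != z -> ce x y != ce x z) /\
    (forall x y, e x y -> cv x != ce x y).

(* Planarity: a drawing in R^2 with distinct vertex points and, for every edge,
   a continuous injective arc joining its endpoints, whose interior avoids
   all vertex points and the interiors of all other edges' arcs.
   g x y is the arc drawn for the edge xy traversed from x to y. *)
Definition planar : Prop :=
  exists (p : T -> (R * R)%type) (g : T -> T -> R -> (R * R)%type),
    injective p /\
    forall x y, e x y ->
      [/\ continuity (fun t => fst (g x y t)) /\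
          continuity (fun t => snd (g x y t)),
          g x y 0%R = p x /\ g x y 1%R = p y,
          (forall s t, (0 <= s <= 1)%R -> (0 <= t <= 1)%R ->
                       g x y s = g x y t -> s = t),
          (forall z t, (0 < t < 1)%R -> g x y t <> p z) &
          (forall x' y' s t, e x' y' -> (0 < s < 1)%R -> (0 < t < 1)%R ->
              g x y s = g x' y' t ->
              (x' = x /\ y' = y) \/ (x' = y /\ y' = x))].

End Graphs.

(* Main.v *)
Require Import Defs.
From mathcomp Require Import all_boot.
From Stdlib Require Import Reals.

Set Implicit Arguments.
Unset Strict Implicit.
Unset Printing Implicit Defensive.

Lemma uniq_map_inj (A B : eqType) (f : A -> B) (s : seq A) :
  uniq (map f s) -> forall q r, q \in s -> r \in s -> q != r -> f q != f r.
Proof.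
elim: s => //= a s IH /andP[nin us] q r; rewrite !inE.
case/orP=> [/eqP->|qs]; case/orP=> [/eqP->|rs] //; first by rewrite eqxx.
- move=> _; apply/eqP=> E; move: nin; rewrite E; by move/negP; apply; apply: map_f.
- move=> _; apply/eqP=> E; move: nin; rewrite -E; by move/negP; apply; apply: map_f.
- exact: IH.
Qed.

Lemma pick_color (l : seq 'I_9) : size l <= 8 -> exists c : 'I_9, c \notin l.
Proof.
move=> hs; apply/existsP; rewrite -negb_forall; apply/negP=> /forallP H.
have : #|'I_9| <= #|l|.
  by apply: subset_leq_card; apply/subsetP=> c _; apply: H.
rewrite card_ord => h; have := leq_trans h (card_size l); move=> h2.
by have := leq_trans h2 hs.
Qed.

Definition pe (T : eqType) (a b p q : T) := ((p == a) && (q == b)) || ((p == b) && (q == a)).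

Lemma sub_planar (T : finType) (e f : rel T) :
  (forall p q, f p q -> e p q) -> planar e -> planar f.
Proof.
move=> sub [p [g [ip H]]]; exists p, g; split=> // x y /sub exy.
case: (H x y exy) => c1 c2 c3 c4 c5; split=> // x' y' s t /sub; exact: c5.
Qed.

Lemma sub_4fan (T : finType) (e f : rel T) :
  (forall p q, f p q -> e p q) -> has_4fan f -> has_4fan e.
Proof.
move=> sub [c [u1 [u2 [u3 [u4 [u5 [U /and5P[h1 h2 h3 h4 h5] /and4P[k1 k2 k3 k4]]]]]]]].
exists c, u1, u2, u3, u4, u5; split=> //; apply/and5P || apply/and4P; split; by apply: sub.
Qed.

Lemma sub_deg (T : finType) (e f : rel T) :
  (forall p q, f p q -> e p q) -> forall p, deg f p <= deg e p.
Proof.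
move=> sub p; apply: subset_leq_card; apply/subsetP=> q; rewrite !inE; exact: sub.
Qed.

Lemma set2_pe (T : finType) (a b p q : T) : p != q -> [set p; q] = [set a; b] -> pe a b p q.
Proof.
move=> npq E.
have hp : p \in [set a; b] by rewrite -E !inE eqxx.
have hq : q \in [set a; b] by rewrite -E !inE eqxx orbT.
move: hp hq; rewrite !inE /pe => /orP[/eqP Ep|/eqP Ep] /orP[/eqP Eq|/eqP Eq];
  subst; rewrite ?eqxx ?orbT //; idtac.
all: by move: npq; rewrite eqxx.
Qed.

Lemma nedges_lt (T : finType) (e f : rel T) a b :
  (forall p q, f p q -> e p q) -> e a b -> (forall p q, f p q -> ~~ pe a b p q) ->
  irreflexive f -> nedges f < nedges e.
Proof.
move=> sub eab nf irr; apply: proper_card; rewrite properE; apply/andP; split.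
  apply/subsetP=> S /imset2P[p q _]; rewrite inE => /andP[_ fpq] ->.
  by apply/imset2P; exists p q => //; rewrite inE sub.
apply/subsetPn; exists [set a; b]; first by apply/imset2P; exists a b => //; rewrite inE eab.
apply/negP=> /imset2P[p q _]; rewrite inE => /andP[_ fpq] E.
have npq : p != q by apply/eqP=> E'; move: fpq; rewrite E' irr.
by move: (nf _ _ fpq); rewrite set2_pe.
Qed.

Lemma vertex_ok (T : finType) (N : pred T) (S : seq T) (L : seq 'I_9)
  (c c' : T -> 'I_9) (cvp : 'I_9) :
  (forall q, N q -> q \notin S -> c' q = c q) ->
  uniq (map c' S) -> all (mem L) (map c' S) ->
  (forall q, N q -> q \notin S -> c q \notin L) ->
  cvp \notin L ->
  (forall q r, N q -> N r -> q \notin S -> r \notin S -> q != r -> c q != c r) ->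
  (forall q, N q -> q \notin S -> cvp != c q) ->
  (forall q r, N q -> N r -> q != r -> c' q != c' r) /\ (forall q, N q -> cvp != c' q).
Proof.
move=> same us aL outL cvL old oldv.
have inL q : q \in S -> c' q \in L.
  by move=> qS; move/allP: aL; apply; apply: map_f.
split.
  move=> q r Nq Nr nqr.
  case qS: (q \in S); case rS: (r \in S).
  - exact: uniq_map_inj us _ _ qS rS nqr.
  - rewrite (same r Nr (negbT rS)); apply/eqP=> E.
    by move: (outL r Nr (negbT rS)); rewrite -E inL.
  - rewrite (same q Nq (negbT qS)); apply/eqP=> E.
    by move: (outL q Nq (negbT qS)); rewrite E inL.
  - by rewrite (same q Nq (negbT qS)) (same r Nr (negbT rS)); apply: old; rewrite ?qS ?rS.
move=> q Nq; case qS: (q \in S).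
  by apply/eqP=> E; move: cvL; rewrite E inL.
by rewrite (same q Nq (negbT qS)); apply: oldv; rewrite ?qS.
Qed.

Lemma pe_sym (T : eqType) (a b p q : T) : pe a b p q = pe a b q p.
Proof. by rewrite /pe orbC; congr (_ || _); rewrite andbC. Qed.

Ltac neqs := repeat match goal with
 | H : is_true (?a != ?b) |- context [?a == ?b] => rewrite (negbTE H)
 | H : is_true (?a != ?b) |- context [?b == ?a] => rewrite [b == a]eq_sym (negbTE H)
 end.

Ltac splitand H := repeat match goal with
 | H0 : is_true (_ && _) |- _ => case/andP: H0 => ? ?
 end.

Lemma explicit_ok (T : finType) (N : pred T) (S : seq T) (c' : T -> 'I_9) (cvp : 'I_9) :
  (forall q, N q -> q \in S) -> uniq (map c' S) -> cvp \notin map c' S ->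
  (forall q r, N q -> N r -> q != r -> c' q != c' r) /\ (forall q, N q -> cvp != c' q).
Proof.
move=> hN us cS; split.
  by move=> q r /hN qS /hN rS; apply: uniq_map_inj us _ _ qS rS.
move=> q /hN qS; apply/eqP=> E; move: cS; rewrite E.
by move/negP; apply; apply: map_f.
Qed.


Ltac symneqs := repeat match goal with
 | H : is_true (?a != ?b) |- _ =>
   lazymatch goal with
   | _ : is_true (b != a) |- _ => fail
   | _ => have : b != a by rewrite eq_sym
   end; move=> ?
 end.

Ltac fin := solve [ done
 | match goal with H : symmetric ?r |- is_true (?r _ _) => rewrite H; done end
 | (rewrite /pe; neqs; rewrite ?eqxx ?andbF ?andbT ?orbF /=; neqs; done)
 | (symneqs; done) ].

Lemma extend (T : finType) (e : rel T) (cv : T -> 'I_9) (ce : T -> T -> 'I_9)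
  (v u w y z t x s : T) (b nuv nux nvw nwx nwy nvy nvz nvt nzt : 'I_9) :
  symmetric e -> irreflexive e ->
  uniq [:: v; u; w; y; z; t; x] -> s != v -> s != t -> s != u -> s != w ->
  e u v -> e u x -> e v w -> e w x -> e w y -> e v y -> e v z -> e v t -> e z t -> e z s ->
  (forall q, e u q -> (q == v) || (q == x)) ->
  (forall q, e w q -> [|| q == v, q == x | q == y]) ->
  (forall q, e z q -> [|| q == v, q == t | q == s]) ->
  (forall p q, e p q -> ~~ pe u v p q -> ce p q = ce q p) ->
  (forall p q, e p q -> ~~ pe u v p q -> cv p != cv q) ->
  (forall p q r, e p q -> ~~ pe u v p q -> e p r -> ~~ pe u v p r -> q != r -> ce p q != ce p r) ->
  (forall p q, e p q -> ~~ pe u v p q -> cv p != ce p q) ->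
  b != cv v -> (forall q, e v q -> q != u -> ce v q != b) ->
  uniq [:: nuv; nvw; nvy; nvz; nvt] ->
  all (mem [:: b; ce v w; ce v y; ce v z; ce v t]) [:: nuv; nvw; nvy; nvz; nvt] ->
  uniq [:: nux; nwx] -> all (mem [:: ce x u; ce x w]) [:: nux; nwx] ->
  uniq [:: nvy; nwy] -> all (mem [:: ce y v; ce y w]) [:: nvy; nwy] ->
  uniq [:: nvt; nzt] -> all (mem [:: ce t v; ce t z]) [:: nvt; nzt] ->
  nuv != nux -> uniq [:: nvw; nwx; nwy] -> uniq [:: nvz; nzt; ce z s] ->
  total9_colorable e.
Proof.
move=> esym eirr U nsv nst nsu nsw euv eux evw ewx ewy evy evz evt ezt ezs Nu Nw Nz
  hsym hcv hce hcve hb hvb Uv Av Ux Ax Uy Ay Ut At nuvux Uw Uz.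
have := U; rewrite /= !inE !negb_or => U'; splitand U'.
pose ce' p q :=
  if pe u v p q then nuv else if pe u x p q then nux else if pe v w p q then nvw
  else if pe w x p q then nwx else if pe w y p q then nwy else if pe v y p q then nvy
  else if pe v z p q then nvz else if pe v t p q then nvt else if pe z t p q then nzt
  else ce p q.
have [cu Hcu] := @pick_color [:: cv v; cv x; ce' u v; ce' u x] isT.
have [cw Hcw] := @pick_color [:: cv v; cv x; cv y; ce' w v; ce' w x; ce' w y] isT.
have [cz Hcz] := @pick_color [:: cv v; cv t; cv s; ce' z v; ce' z t; ce' z s] isT.
pose cv' p := if p == u then cu else if p == w then cw else if p == z then cz else cv p.
exists cv', ce'.

have cvv : cv' v = cv v by rewrite /cv'; neqs.
have cvx : cv' x = cv x by rewrite /cv'; neqs.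
have cvy : cv' y = cv y by rewrite /cv'; neqs.
have cvt : cv' t = cv t by rewrite /cv'; neqs.
have nsz : s != z by apply/eqP=> E; move: ezs; rewrite E eirr.
have cvs : cv' s = cv s by rewrite /cv'; neqs.
have Euv : ce' u v = nuv by rewrite /ce' /pe; neqs; rewrite ?eqxx /=; neqs.
have Evu : ce' v u = nuv by rewrite /ce' /pe; neqs; rewrite ?eqxx /=; neqs.
have Eux : ce' u x = nux by rewrite /ce' /pe; neqs; rewrite ?eqxx /=; neqs.
have Exu : ce' x u = nux by rewrite /ce' /pe; neqs; rewrite ?eqxx /=; neqs.
have Ewv : ce' w v = nvw by rewrite /ce' /pe; neqs; rewrite ?eqxx /=; neqs.
have Evw : ce' v w = nvw by rewrite /ce' /pe; neqs; rewrite ?eqxx /=; neqs.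
have Ewx : ce' w x = nwx by rewrite /ce' /pe; neqs; rewrite ?eqxx /=; neqs.
have Exw : ce' x w = nwx by rewrite /ce' /pe; neqs; rewrite ?eqxx /=; neqs.
have Ewy : ce' w y = nwy by rewrite /ce' /pe; neqs; rewrite ?eqxx /=; neqs.
have Eyw : ce' y w = nwy by rewrite /ce' /pe; neqs; rewrite ?eqxx /=; neqs.
have Evy : ce' v y = nvy by rewrite /ce' /pe; neqs; rewrite ?eqxx /=; neqs.
have Eyv : ce' y v = nvy by rewrite /ce' /pe; neqs; rewrite ?eqxx /=; neqs.
have Evz : ce' v z = nvz by rewrite /ce' /pe; neqs; rewrite ?eqxx /=; neqs.
have Ezv : ce' z v = nvz by rewrite /ce' /pe; neqs; rewrite ?eqxx /=; neqs.
have Evt : ce' v t = nvt by rewrite /ce' /pe; neqs; rewrite ?eqxx /=; neqs.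
have Etv : ce' t v = nvt by rewrite /ce' /pe; neqs; rewrite ?eqxx /=; neqs.
have Ezt : ce' z t = nzt by rewrite /ce' /pe; neqs; rewrite ?eqxx /=; neqs.
have Etz : ce' t z = nzt by rewrite /ce' /pe; neqs; rewrite ?eqxx /=; neqs.
have Ezs : ce' z s = ce z s by rewrite /ce' /pe; neqs; rewrite ?eqxx /=; neqs.

have npe p q : p != u -> p != v -> ~~ pe u v p q.
  by move=> h1 h2; rewrite /pe; neqs.
have npev q : q != u -> ~~ pe u v v q.
  by move=> h1; rewrite /pe; neqs; rewrite eqxx /=; neqs.
have loc : forall p, (forall q r, e p q -> e p r -> q != r -> ce' p q != ce' p r) /\
                     (forall q, e p q -> cv' p != ce' p q).
  move=> p.
  case: (eqVneq p u) => [->|npu].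
    have ->: cv' u = cu by rewrite /cv' eqxx.
    apply: (explicit_ok (S := [:: v; x])).
    - by move=> q /Nu; rewrite !inE.
    - by rewrite /= Euv Eux inE nuvux.
    - by move: Hcu; rewrite /= Euv Eux !inE !negb_or; case/and4P=> _ _ -> ->.
  case: (eqVneq p w) => [->|npw].
    have ->: cv' w = cw by rewrite /cv'; neqs; rewrite eqxx.
    apply: (explicit_ok (S := [:: v; x; y])).
    - by move=> q /Nw; rewrite !inE.
    - by rewrite /= Ewv Ewx Ewy.
    - by move: Hcw; rewrite /= Ewv Ewx Ewy !inE !negb_or; case/and5P=> _ _ _ -> /andP[-> ->].
  case: (eqVneq p z) => [->|npz].
    have ->: cv' z = cz by rewrite /cv'; neqs; rewrite eqxx.
    apply: (explicit_ok (S := [:: v; t; s])).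
    - by move=> q /Nz; rewrite !inE.
    - by rewrite /= Ezv Ezt Ezs.
    - by move: Hcz; rewrite /= Ezv Ezt Ezs !inE !negb_or; case/and5P=> _ _ _ -> /andP[-> ->].
  case: (eqVneq p v) => [->|npv].
    rewrite cvv; apply: (vertex_ok (S := [:: u; w; y; z; t]) (L := [:: b; ce v w; ce v y; ce v z; ce v t]) (c := ce v)).
    - move=> q _; rewrite !inE !negb_or => hq; splitand hq.
      by rewrite /ce' /pe; neqs; rewrite ?eqxx /=; neqs.
    - by rewrite /= Evu Evw Evy Evz Evt.
    - by rewrite /= Evu Evw Evy Evz Evt.
    - move=> q epq; rewrite !inE !negb_or => hq; splitand hq; symneqs.
      repeat (apply/andP; split); first [ (apply: hvb; fin) | (apply: hce; fin) ].
    - rewrite !inE !negb_or; repeat (apply/andP; split);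
        first [ by rewrite eq_sym | (apply: hcve; fin) ].
    - move=> q r epq epr; rewrite !inE !negb_or => hq hr; splitand hq; splitand hr.
      by apply: hce; fin.
    - move=> q epq; rewrite !inE !negb_or => hq; splitand hq.
      by apply: hcve; fin.
  case: (eqVneq p x) => [->|npx].
    rewrite cvx; apply: (vertex_ok (S := [:: u; w]) (L := [:: ce x u; ce x w]) (c := ce x)).
    - move=> q _; rewrite !inE !negb_or => hq; splitand hq.
      by rewrite /ce' /pe; neqs; rewrite ?eqxx /=; neqs.
    - by rewrite /= Exu Exw.
    - by rewrite /= Exu Exw.
    - move=> q epq; rewrite !inE !negb_or => hq; splitand hq; symneqs.
      repeat (apply/andP; split); first [ (apply: hvb; fin) | (apply: hce; fin) ].
    - rewrite !inE !negb_or; repeat (apply/andP; split);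
        first [ by rewrite eq_sym | (apply: hcve; fin) ].
    - move=> q r epq epr; rewrite !inE !negb_or => hq hr; splitand hq; splitand hr.
      by apply: hce; fin.
    - move=> q epq; rewrite !inE !negb_or => hq; splitand hq.
      by apply: hcve; fin.
  case: (eqVneq p y) => [->|npy].
    rewrite cvy; apply: (vertex_ok (S := [:: v; w]) (L := [:: ce y v; ce y w]) (c := ce y)).
    - move=> q _; rewrite !inE !negb_or => hq; splitand hq.
      by rewrite /ce' /pe; neqs; rewrite ?eqxx /=; neqs.
    - by rewrite /= Eyv Eyw.
    - by rewrite /= Eyv Eyw.
    - move=> q epq; rewrite !inE !negb_or => hq; splitand hq; symneqs.
      repeat (apply/andP; split); first [ (apply: hvb; fin) | (apply: hce; fin) ].
    - rewrite !inE !negb_or; repeat (apply/andP; split);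
        first [ by rewrite eq_sym | (apply: hcve; fin) ].
    - move=> q r epq epr; rewrite !inE !negb_or => hq hr; splitand hq; splitand hr.
      by apply: hce; fin.
    - move=> q epq; rewrite !inE !negb_or => hq; splitand hq.
      by apply: hcve; fin.
  case: (eqVneq p t) => [->|npt].
    rewrite cvt; apply: (vertex_ok (S := [:: v; z]) (L := [:: ce t v; ce t z]) (c := ce t)).
    - move=> q _; rewrite !inE !negb_or => hq; splitand hq.
      by rewrite /ce' /pe; neqs; rewrite ?eqxx /=; neqs.
    - by rewrite /= Etv Etz.
    - by rewrite /= Etv Etz.
    - move=> q epq; rewrite !inE !negb_or => hq; splitand hq; symneqs.
      repeat (apply/andP; split); first [ (apply: hvb; fin) | (apply: hce; fin) ].
    - rewrite !inE !negb_or; repeat (apply/andP; split);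
        first [ by rewrite eq_sym | (apply: hcve; fin) ].
    - move=> q r epq epr; rewrite !inE !negb_or => hq hr; splitand hq; splitand hr.
      by apply: hce; fin.
    - move=> q epq; rewrite !inE !negb_or => hq; splitand hq.
      by apply: hcve; fin.
  have ->: cv' p = cv p by rewrite /cv'; neqs.
  apply: (vertex_ok (S := [::]) (L := [::]) (c := ce p)) => //.
  - move=> q _ _; by rewrite /ce' /pe; neqs.
  - move=> q r epq epr _ _ nqr; by apply: hce; fin.
  - move=> q epq _; by apply: hcve; fin.
have adj : forall p q, e p q -> p \in [:: u; w; z] -> cv' p != cv' q.
  move=> p q epq; rewrite !inE => /or3P[/eqP Ep|/eqP Ep|/eqP Ep]; subst p.
  - have ->: cv' u = cu by rewrite /cv' eqxx.
    move: Hcu; rewrite !inE !negb_or => /and4P[h1 h2 _ _].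
    by case/orP: (Nu q epq) => /eqP->; rewrite ?cvv ?cvx.
  - have ->: cv' w = cw by rewrite /cv'; neqs; rewrite eqxx.
    move: Hcw; rewrite !inE !negb_or => /and5P[h1 h2 h3 _ _].
    by case/or3P: (Nw q epq) => /eqP->; rewrite ?cvv ?cvx ?cvy.
  - have ->: cv' z = cz by rewrite /cv'; neqs; rewrite eqxx.
    move: Hcz; rewrite !inE !negb_or => /and5P[h1 h2 h3 _ _].
    by case/or3P: (Nz q epq) => /eqP->; rewrite ?cvv ?cvt ?cvs.
split; last split; last split.
- move=> p q epq; rewrite /ce' ![pe _ _ q p]pe_sym.
  case: ifP => // hA; do 8 (case: ifP => // _).
  by apply: hsym; rewrite ?hA.
- move=> p q epq.
  case pS: (p \in [:: u; w; z]); first exact: adj.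
  case qS: (q \in [:: u; w; z]); first by rewrite eq_sym; apply: adj; rewrite // esym.
  move: pS qS; rewrite !inE => /negbT hp /negbT hq.
  move: hp hq; rewrite !negb_or => hp hq; splitand hp.
  have ->: cv' p = cv p by rewrite /cv'; neqs.
  have ->: cv' q = cv q by rewrite /cv'; neqs.
  by apply: hcv; fin.
- by move=> p q r epq epr nqr; apply: (loc p).1.
- by move=> p q epq; apply: (loc p).2.
Qed.

Ltac clc := rewrite /= ?inE ?negb_or; symneqs; neqs; rewrite ?eqxx ?orbT ?andbT //=.

Lemma moves (b a c d f ux wx wy zt zs : 'I_9) :
  uniq [:: b; a; c; d; f] -> ux != wx -> c != wy -> f != zt ->
  uniq [:: a; wx; wy] -> uniq [:: d; zt; zs] ->
  exists nuv nux nvw nwx nwy nvy nvz nvt nzt : 'I_9,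
  [/\ uniq [:: nuv; nvw; nvy; nvz; nvt] /\
      all (mem [:: b; a; c; d; f]) [:: nuv; nvw; nvy; nvz; nvt],
      uniq [:: nux; nwx] /\ all (mem [:: ux; wx]) [:: nux; nwx],
      uniq [:: nvy; nwy] /\ all (mem [:: c; wy]) [:: nvy; nwy],
      uniq [:: nvt; nzt] /\ all (mem [:: f; zt]) [:: nvt; nzt] &
      [/\ nuv != nux, uniq [:: nvw; nwx; nwy] & uniq [:: nvz; nzt; zs]]].
Proof.
move=> U1 h1 h2 h3 U2 U3; move: U1 U2 U3; rewrite /= !inE !negb_or => U1 U2 U3.
splitand U1.
case: (eqVneq ux b) => [Eub|nub].
  2: by exists b, ux, a, wx, wy, c, d, f, zt; split; clc.
subst ux.
case: (eqVneq wy b) => [Ewb|nwb].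
  2: by exists a, b, b, wx, wy, c, d, f, zt; split; clc.
subst wy.
case: (eqVneq wx c) => [Exc|nxc].
  2: by exists c, b, a, wx, c, b, d, f, zt; split; clc.
subst wx.
case: (eqVneq zt b) => [Etb|ntb].
  subst zt.
  case: (eqVneq zs f) => [Esf|nsf].
    subst zs. by exists d, c, a, b, c, b, c, f, b; split; clc.
  by exists f, b, a, c, b, c, d, b, f; split; clc.
case: (eqVneq zs b) => [Esb|nsb].
  subst zs.
  case: (eqVneq zt c) => [Etc|ntc].
    subst zt. by exists f, c, a, b, c, b, d, c, f; split; clc.
  by exists d, c, a, b, c, b, c, f, zt; split; clc.
by exists d, b, a, c, b, c, b, f, zt; split; clc.
Qed.

Lemma nbrs2 (T : finType) (e : rel T) p a b : deg e p = 2 -> e p a -> e p b -> a != b ->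
  forall q, e p q -> (q == a) || (q == b).
Proof.
move=> d ea eb nab.
have E : [set a; b] = [set q | e p q].
  apply/eqP; rewrite eqEcard; apply/andP; split.
    by apply/subsetP=> q; rewrite !inE => /orP[/eqP->|/eqP->].
  by rewrite cards2 nab; rewrite -[#|_|]/(deg e p) d.
move=> q epq; have : q \in [set q | e p q] by rewrite inE.
by rewrite -E !inE.
Qed.

Lemma nbrs_third (T : finType) (e : rel T) p a b : deg e p = 3 -> e p a -> e p b -> a != b ->
  exists s, [/\ s != a, s != b, e p s & forall q, e p q -> [|| q == a, q == b | q == s]].
Proof.
move=> d ea eb nab.
set N := [set q | e p q].
have sub : [set a; b] \subset N by apply/subsetP=> q; rewrite !inE => /orP[/eqP->|/eqP->].
have : #|N :\: [set a; b]| == 1.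
  by rewrite cardsDS // cards2 nab -[#|N|]/(deg e p) d.
case/cards1P => s Es.
have : s \in N :\: [set a; b] by rewrite Es set11.
rewrite !inE negb_or => /andP[/andP[nsa nsb] eps].
exists s; split=> // q epq.
case: (boolP (q \in [set a; b])) => [|nq].
  by rewrite !inE => /orP[->|->]; rewrite ?orbT.
have : q \in N :\: [set a; b] by rewrite !inE in nq *; rewrite nq epq.
by rewrite Es inE => ->; rewrite !orbT.
Qed.

Lemma nbrs3 (T : finType) (e : rel T) p a b c : deg e p = 3 -> e p a -> e p b -> e p c ->
  uniq [:: a; b; c] -> forall q, e p q -> [|| q == a, q == b | q == c].
Proof.
move=> d ea eb ec U.
move: U; rewrite /= !inE !negb_or => /andP[/andP[nab nac] /andP[nbc _]].
have [s [nsa nsb eps Hs]] := nbrs_third d ea eb nab.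
have : [|| c == a, c == b | c == s] by apply: Hs.
rewrite [c == a]eq_sym [c == b]eq_sym (negbTE nac) (negbTE nbc) /= => /eqP Ecs.
by move=> q /Hs; rewrite Ecs.
Qed.

Theorem lemma2p14 (T : finType) (e : rel T) :
  sgraph e -> planar e ->
  (forall v, deg e v <= 8) -> (exists v, deg e v = 8) ->
  ~ has_4fan e ->
  ~ total9_colorable e ->
  (forall (U : finType) (f : rel U),
      sgraph f -> planar f -> (forall v, deg f v <= 8) -> ~ has_4fan f ->
      #|U| + nedges f < #|T| + nedges e -> total9_colorable f) ->
  ~ (exists v u w y z t x : T,
       [/\ deg e v = 8, uniq [:: v; u; w; y; z; t],
           [&& e v u, e v w, e v y, e v z & e v t],
           x \notin [:: v; u; w; y; z; t] &
           [/\ deg e u = 2, deg e w = 3, deg e z = 3 &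
               [&& e x u, e x w, e w y & e z t]]]).
Proof.
move=> [esym eirr] pl degb _ no4 ncol min
  [v [u [w [y [z [t [x [dv U0 /and5P[evu evw evy evz evt] xnot [du dw dz /and4P[exu exw ewy ezt]]]]]]]]]].
have U : uniq [:: v; u; w; y; z; t; x].
  by rewrite -[[:: v; u; w; y; z; t; x]]/(rcons [:: v; u; w; y; z; t] x) rcons_uniq xnot U0.
have := U; rewrite /= !inE !negb_or => U'; splitand U'.
have euv : e u v by rewrite esym.
have eux : e u x by rewrite esym.
have ewx : e w x by rewrite esym.
have nvx : v != x by [].
have Nu := nbrs2 du euv eux nvx.
have ewv : e w v by rewrite esym.
have ezv : e z v by rewrite esym.
have Uw : uniq [:: v; x; y] by rewrite /= !inE !negb_or; symneqs; neqs.
have Nw' := nbrs3 dw ewv ewx ewy Uw.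
have nvt0 : v != t by [].
have [s [nsv nst ezs Nz]] := nbrs_third dz ezv ezt nvt0.
have nsu : s != u.
  apply/eqP=> Esu; have : e u z by rewrite esym -Esu.
  by move/Nu; symneqs; neqs.
have nsw : s != w.
  apply/eqP=> Esw; have : e w z by rewrite esym -Esw.
  by move/Nw'; symneqs; neqs.
pose H := fun p q => e p q && ~~ pe u v p q.
have [cv [ce [hs [hv [he hve]]]]] : total9_colorable H.
  apply: min.
  - split; first by move=> p q; rewrite /H esym pe_sym.
    by move=> p; rewrite /H eirr.
  - by apply: sub_planar pl => p q /andP[].
  - move=> p; apply: leq_trans (degb p); by apply: sub_deg => p' q /andP[].
  - by move=> h; apply: no4; apply: sub_4fan h => p q /andP[].
  - rewrite ltn_add2l; apply: (nedges_lt (a := u) (b := v)) => //.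
    + by move=> p q /andP[].
    + by move=> p q /andP[].
    + by move=> p; rewrite /H eirr.
have hH p q : e p q -> ~~ pe u v p q -> H p q by move=> h1 h2; rewrite /H h1 h2.
have npev q : q != u -> ~~ pe u v v q by move=> h; rewrite /pe; neqs; rewrite eqxx /=; neqs.
have npe p q : p != u -> p != v -> ~~ pe u v p q by move=> h1 h2; rewrite /pe; neqs.
have [b [hb hvb]] : exists b, b != cv v /\ forall q, e v q -> q != u -> ce v q != b.
  pose A := cv v |: [set ce v q | q in [set q | e v q & q != u]].
  have cA : #|A| <= 8.
    have E : [set q | e v q & q != u] = [set q | e v q] :\ u.
      by apply/setP=> q; rewrite !inE andbC.
    have c7 : #|[set q | e v q & q != u]| = 7.
      have := cardsD1 u [set q | e v q]; rewrite -E inE evu.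
      by rewrite -[#|[set q | e v q]|]/(deg e v) dv => [[->]].
    rewrite cardsU1; apply: leq_trans (leq_add (leq_b1 _) (leq_imset_card _ _)) _.
    by rewrite c7.
  have : 0 < #|~: A| by have := cardsC A; rewrite card_ord; move=> h; rewrite -(ltn_add2l #|A|) h addn0; apply: leq_ltn_trans cA _.
  case/card_gt0P=> b; rewrite inE /A !inE negb_or => /andP[h1 h2].
  exists b; split=> // q evq nqu; apply/eqP=> E; move/negP: h2; apply; rewrite -E.
  by apply: imset_f; rewrite inE evq nqu.
symneqs.
have he' p q r : e p q -> ~~ pe u v p q -> e p r -> ~~ pe u v p r -> q != r -> ce p q != ce p r.
  by move=> h1 h2 h3 h4 h5; apply: he; rewrite /H ?h1 ?h2 ?h3 ?h4.
have hs' p q : e p q -> ~~ pe u v p q -> ce p q = ce q p.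
  by move=> h1 h2; apply: hs; rewrite /H h1 h2.
have hv' p q : e p q -> ~~ pe u v p q -> cv p != cv q.
  by move=> h1 h2; apply: hv; rewrite /H h1 h2.
have hve' p q : e p q -> ~~ pe u v p q -> cv p != ce p q.
  by move=> h1 h2; apply: hve; rewrite /H h1 h2.
have Ub : uniq [:: b; ce v w; ce v y; ce v z; ce v t].
  rewrite /= !inE !negb_or; repeat (apply/andP; split); try done;
    first [ (rewrite eq_sym; apply: hvb; fin) | (apply: he'; fin) ].
have h1 : ce x u != ce x w by apply: he'; fin.
have h2 : ce v y != ce y w by rewrite (hs' v y); [apply: he'; fin | fin | fin].
have h3 : ce v t != ce t z by rewrite (hs' v t); [apply: he'; fin | fin | fin].
have U2 : uniq [:: ce v w; ce x w; ce y w].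
  rewrite (hs' v w) ?(hs' x w) ?(hs' y w); try fin.
  rewrite /= !inE !negb_or; repeat (apply/andP; split); try done; apply: he'; fin.
have U3 : uniq [:: ce v z; ce t z; ce z s].
  rewrite (hs' v z) ?(hs' t z); try fin.
  rewrite /= !inE !negb_or; repeat (apply/andP; split); try done; apply: he'; fin.
have [nuv [nux [nvw [nwx [nwy [nvy [nvz [nvt [nzt
  [[Uv Av] [Ux Ax] [Uy Ay] [Ut At] [nuvux Uw2 Uz]]]]]]]]]]] := moves Ub h1 h2 h3 U2 U3.
rewrite (hs' v y) in Ay; try fin.
rewrite (hs' v t) in At; try fin.
apply: ncol.
apply: (extend esym eirr U nsv nst nsu nsw euv eux evw ewx ewy evy evz evt ezt ezs Nu Nw' Nz
  hs' hv' he' hve' hb hvb Uv Av Ux Ax Uy Ay Ut At nuvux Uw2 Uz).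
Qed.
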